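(* Let $I_n$ denote the number of inversion sequences of length $n$ avoiding all of the patterns $010,101,110,120,201,210$ (with $I_0=1$). Let $X=X(z)$ be the unique formal power series in $z$ satisfying $1-X-zX+2zX^2+z^2X-z^2X^3=0$. Then $$\sum_{n\ge0}I_nz^n=\frac{(X-1)(1-zX+z^2X)}{zX}=1+z+2z^2+5z^3+15z^4+50z^5+178z^6+663z^7+\cdots.$$
   Context: An inversion sequence of length $n$ is an integer sequence $(a_1,\dots,a_n)$ with $0\le a_i<i$ for all $i$. A pattern is a sequence $\sigma$ of non-negative integers containing every value from $0$ to $\max(\sigma)$; the reduction of a sequence replaces its smallest values by $0$, the next smallest by $1$, etc. A sequence $a$ contains $\sigma$ if some (not necessarily consecutive) subsequence of $a$ has reduction $\sigma$; otherwise $a$ avoids $\sigma$. Equivalently, these are the inversion sequences with no $i<j<k$ such that $a_j\ne a_k$ and $a_i\ge a_k$. *)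

(* Defs.v *)
From mathcomp Require Import all_boot all_order all_algebra.
Set Implicit Arguments. Unset Strict Implicit. Unset Printing Implicit Defensive.
Import Order.TTheory GRing.Theory Num.Theory.

(* A sequence (a_1,...,a_n) stored 0-indexed: position i holds a_(i+1),
   so the condition 0 <= a_(i+1) < i+1. *)
Definition is_invseq (s : seq nat) : bool :=
  all (fun i => nth 0 s i < i.+1) (iota 0 (size s)).

Definition reduction (s : seq nat) : seq nat :=
  map (fun x => size (undup (filter (fun y => y < x) s))) s.

Definition contains (s sigma : seq nat) : bool :=
  [exists m : (size s).-tuple bool, reduction (mask m s) == sigma].

Definition avoids (s sigma : seq nat) : bool := ~~ contains s sigma.

Definition pats : seq (seq nat) :=
  [:: [:: 0; 1; 0]; [:: 1; 0; 1]; [:: 1; 1; 0];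
      [:: 1; 2; 0]; [:: 2; 0; 1]; [:: 2; 1; 0]].

(* I_n : number of inversion sequences of length n avoiding all of pats.
   Entries of an inversion sequence of length n are < n, so they are
   enumerated as n-tuples over 'I_n. *)
Definition I_count (n : nat) : nat :=
  #|[pred a : n.-tuple 'I_n |
      is_invseq (map val a) && all (avoids (map val a)) pats]|.

Local Open Scope ring_scope.

Definition fps := nat -> rat.
Definition fps_const (c : rat) : fps := fun n => if n == 0%N then c else 0.
Definition fps_z : fps := fun n => if n == 1%N then 1 else 0.
Definition fps_add (f g : fps) : fps := fun n => f n + g n.
Definition fps_opp (f : fps) : fps := fun n => - f n.
Definition fps_sub (f g : fps) : fps := fps_add f (fps_opp g).
Definition fps_mul (f g : fps) : fps :=
  fun n => \sum_(i < n.+1) f i * g (n - i)%N.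

Definition X_eqn_lhs (X : fps) : fps :=
  let z := fps_z in
  let c := fps_const in
  fps_add
   (fps_add
     (fps_add
       (fps_sub (fps_sub (c 1) X) (fps_mul z X))
       (fps_mul (c 2) (fps_mul z (fps_mul X X))))
     (fps_mul (fps_mul z z) X))
   (fps_opp (fps_mul (fps_mul z z) (fps_mul X (fps_mul X X)))).

Definition solves_X_eqn (X : fps) : Prop := forall n, X_eqn_lhs X n = 0.

Definition I_gf : fps := fun n => (I_count n)%:R.

(* Main.v *)
Require Import Defs.
From mathcomp Require Import all_boot all_order all_algebra.
From Stdlib Require Import FunctionalExtensionality Ring.
From mathcomp Require Import zify.
Set Implicit Arguments. Unset Strict Implicit. Unset Printing Implicit Defensive.
Import Order.TTheory GRing.Theory Num.Theory.


Lemma red3 a b c : (reduction [:: a; b; c] \in pats) = (b != c) && (c <= a).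
Proof.
rewrite /reduction /=.
case: (ltngtP a b) => hab; case: (ltngtP b c) => hbc; case: (ltngtP a c) => hac;
  rewrite ?hab ?hbc ?hac ?ltnn /= ?(ltn_geF (ltnW hab)) ?(ltn_geF (ltnW hbc)) ?(ltn_geF (ltnW hac));
  try (subst; rewrite ?ltnn /=); try lia.
all: rewrite ?inE ?eqxx ?(ltn_eqF hab) ?(gtn_eqF hab) ?(ltn_eqF hbc) ?(gtn_eqF hbc) ?(ltn_eqF hac) ?(gtn_eqF hac) /=; try done.
Qed.

Lemma containsP s sigma :
  reflect (exists u, subseq u s /\ reduction u = sigma) (contains s sigma).
Proof.
apply: (iffP existsP) => [[m /eqP hm]|[u [/subseqP [m hm ->] hr]]].
  by exists (mask m s); split => //; apply: mask_subseq.
by exists (Tuple (introT eqP hm)); rewrite /= hr.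
Qed.

Definition TP (s : seq nat) :=
  forall a b c, subseq [:: a; b; c] s -> (b == c) || (a < c).

Lemma avoidsP s : reflect (TP s) (all (avoids s) pats).
Proof.
apply: (iffP allP) => [h a b c hs|h sg hsg].
  have := h _ (introT idP (mem_head _ _)).
  case: (boolP ((b != c) && (c <= a))) => hb.
  - move: hb; rewrite -red3 => hin _.
    have := h _ hin; rewrite /avoids => /negP; case.
    by apply/containsP; exists [:: a; b; c].
  - by move=> _; move: hb; rewrite negb_and negbK -ltnNge.
apply/negP => /containsP [u [hu hr]].
have hsz : size u = 3.
  have e : size (reduction u) = size u by rewrite size_map.
  have : all (fun q => size q == 3) pats by [].
  by move/allP/(_ _ hsg); rewrite -hr e => /eqP.
move: hu hr; case: u hsz => [|a [|b [|c [|? ?]]]] //= _ hu hr.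
have := h a b c hu; move: hsg; rewrite -hr red3; lia.
Qed.

Lemma subseq_rcons2 (u t : seq nat) c l :
  subseq (rcons u c) (rcons t l) = subseq (rcons u c) t || ((c == l) && subseq u t).
Proof.
rewrite -subseq_rev !rev_rcons /=; case: eqP => [->|_]; last first.
  by rewrite orbF -[in RHS]subseq_rev rev_rcons.
rewrite subseq_rev /=.
apply/idP/idP => [->|/orP [h|//]]; first by rewrite orbT.
exact: subseq_trans (subseq_rcons _ _) h.
Qed.

Lemma subseq3 (t : seq nat) a b c l :
  subseq [:: a; b; c] (rcons t l) = subseq [:: a; b; c] t || ((c == l) && subseq [:: a; b] t).
Proof. exact: (subseq_rcons2 [:: a; b]). Qed.

Lemma subseq2 (t : seq nat) a b l :
  subseq [:: a; b] (rcons t l) = subseq [:: a; b] t || ((b == l) && (a \in t)).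
Proof. by rewrite (subseq_rcons2 [:: a]) sub1seq. Qed.

Lemma subseq_nil2 (a b : nat) : subseq [:: a; b] [::] = false. Proof. by []. Qed.

Fixpoint okr (r : seq nat) x :=
  if r is l :: r' then okr r' x && ((l == x) || all (fun y => y < x) r') else true.
Definition ok t x := okr (rev t) x.

Lemma ok_rcons t l x : ok (rcons t l) x = ok t x && ((l == x) || all (fun y => y < x) t).
Proof. by rewrite /ok rev_rcons /= all_rev. Qed.

Lemma ok_nil x : ok [::] x. Proof. by []. Qed.

Definition OP (t : seq nat) x := forall a b, subseq [:: a; b] t -> (b == x) || (a < x).

Lemma okP t x : reflect (OP t x) (ok t x).
Proof.
elim/last_ind: t => [|t l IH]; first by constructor => a b.
rewrite ok_rcons; apply: (iffP andP) => [[/IH h1 h2] a b|h].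
  rewrite subseq2 => /orP [/h1 //|/andP [/eqP -> ha]].
  by case/orP: h2 => [-> //|/allP/(_ _ ha) ->]; rewrite orbT.
split.
  by apply/IH => a b hs; apply: h; rewrite subseq2 hs.
case: eqP => //= hl; apply/allP => a ha.
by have := h a l; rewrite subseq2 ha eqxx orbT => /(_ isT); case: eqP.
Qed.

Lemma TP_rcons t l : TP (rcons t l) <-> TP t /\ OP t l.
Proof.
split => [h|[h1 h2] a b c].
  split => [a b c hs|a b hs]; apply: h; by rewrite subseq3 hs ?eqxx ?orbT.
rewrite subseq3 => /orP [/h1 //|/andP [/eqP -> hs]]; exact: h2.
Qed.

Lemma iotaS0 n : iota 0 n.+1 = rcons (iota 0 n) n.
Proof. by rewrite -cats1 -addn1 iotaD. Qed.

Lemma invseq_rcons t x : is_invseq (rcons t x) = is_invseq t && (x <= size t).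
Proof.
rewrite /is_invseq size_rcons iotaS0 all_rcons nth_rcons ltnn eqxx ltnS andbC.
congr (_ && _); apply: eq_in_all => i; rewrite mem_iota => /andP [_]; rewrite add0n => hi.
by rewrite nth_rcons hi.
Qed.

Definition good (s : seq nat) := is_invseq s && all (avoids s) pats.

Lemma good_nil : good [::].
Proof. by rewrite /good; apply/andP; split => //; apply/avoidsP => a b c. Qed.

Lemma good_rcons t x : good (rcons t x) = [&& good t, x <= size t & ok t x].
Proof.
rewrite /good invseq_rcons.
case: (is_invseq t) => //=; case: (x <= size t) => //=; last by rewrite andbF.
apply/avoidsP/andP => [/TP_rcons [h1 h2]|[/avoidsP h1 /okP h2]].
  by split; [apply/avoidsP | apply/okP].
by apply/TP_rcons.
Qed.
Fixpoint acnt (m : nat) : nat -> nat :=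
  match m with
  | 0 => fun _ => 1%N
  | S m' => fun h =>
      (sumn [seq (acnt m' h' + (h - h') *
                  (match m' with 0 => 0 | S m'' => acnt m'' h'.+1 end))%N
            | h' <- iota 0 h.+1] + acnt m' h.+1)%N
  end.

Definition ccnt m x := match m with 0 => 0%N | S m' => acnt m' x end.

Definition Gs m h := sumn [seq (acnt m h' + (h - h') * ccnt m h'.+1)%N | h' <- iota 0 h.+1].
Definition Hs m h := sumn [seq ccnt m h'.+1 | h' <- iota 0 h.+1].


Lemma acntS m h : acnt m.+1 h = (Gs m h + acnt m h.+1)%N.
Proof. by []. Qed.

Definition mx (s : seq nat) := foldr (fun y m => maxn y.+1 m) 0 s.

Lemma all_lt_mx x s : all (fun y => y < x) s = (mx s <= x).
Proof. by elim: s => //= y s ->; rewrite geq_max. Qed.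

Lemma mx_rcons t l : mx (rcons t l) = maxn (mx t) l.+1.
Proof. by elim: t => [|y t IH] /=; rewrite ?max0n ?maxn0 // IH maxnA. Qed.

Lemma good_mx s : good s -> mx s <= size s.
Proof.
elim/last_ind: s => [|t l IH] //; rewrite good_rcons mx_rcons size_rcons => /and3P [/IH h1 h2 _].
by rewrite geq_max ltnS h2 (leq_trans h1).
Qed.

Lemma ok_all s x : mx s <= x -> ok s x.
Proof.
elim/last_ind: s => [|t l IH] //; rewrite mx_rcons geq_max ok_rcons => /andP [h1 h2].
by rewrite IH // all_lt_mx h1 orbT.
Qed.

Definition gp (s : seq nat) :=
  let t := take (size s).-1 s in let l := last 0 s in
  if mx t <= l then (l.+1 - mx t) else 1.

Lemma gp_rcons t l : gp (rcons t l) = if mx t <= l then (l.+1 - mx t) else 1.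
Proof.
rewrite /gp last_rcons size_rcons /=.
by have -> : take (size t) (rcons t l) = t by rewrite -cats1 take_size_cat.
Qed.

Lemma gp_pos s : 0 < gp s.
Proof. rewrite /gp /=; case: ifP => //; lia. Qed.

Definition Fst m s := acnt m (size s - mx s) + (gp s).-1 * ccnt m (size s - mx s).+1.

Fixpoint L (N n : nat) : seq (seq nat) :=
  if n is n'.+1 then [seq x :: u | x <- iota 0 N, u <- L N n'] else [:: [::]].

Definition Cc N m s := count (fun u => good (s ++ u)) (L N m).

Lemma count_allpairs (P : pred (seq nat)) xs us :
  count P [seq x :: u | x <- xs, u <- us] = sumn [seq count (fun u => P (x :: u)) us | x <- xs].
Proof. by elim: xs => //= x xs IH; rewrite count_cat IH count_map. Qed.

Lemma Cc_S N m s : Cc N m.+1 s = \sum_(0 <= x < N) Cc N m (rcons s x).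
Proof.
rewrite /Cc /= count_allpairs sumnE big_map /index_iota subn0.
by apply: eq_bigr => x _; apply: eq_count => u; rewrite cat_rcons.
Qed.

Lemma good_cat s u : good (s ++ u) -> good s.
Proof.
elim/last_ind: u => [|u y IH]; first by rewrite cats0.
by rewrite -rcons_cat good_rcons => /andP [/IH].
Qed.

Lemma Cc_bad N m s : ~~ good s -> Cc N m s = 0.
Proof.
move=> h; rewrite /Cc (eq_count (a2 := pred0)) ?count_pred0 // => u.
by apply/negbTE/negP => /good_cat; apply/negP.
Qed.

Lemma cnt_int lo hi n : \sum_(0 <= x < n) ((lo <= x) && (x < hi) : nat) = minn hi n - lo.
Proof.
elim: n => [|n IH]; first by rewrite big_geq // minn0.
rewrite big_nat_recr //= IH.
case: (leqP lo n) => h1; case: (ltnP n hi) => h2 /=; lia.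
Qed.

Lemma ind_lt t l x : good (rcons t l) -> x < mx (rcons t l) ->
  good (rcons (rcons t l) x) = (minn (mx t) l <= x) && (x < l.+1).
Proof.
move=> hg hx; have hmx := good_mx hg.
rewrite good_rcons hg /= (leq_trans (ltnW hx) hmx) /= ok_rcons.
move: hg; rewrite good_rcons => /and3P [_ hl okl].
rewrite mx_rcons in hx.
case: (x =P l) => [->|hne].
  by rewrite okl eqxx /=; apply/esym; apply/andP; split => //; apply: geq_minr.
rewrite /= all_lt_mx.
case: (leqP (mx t) x) => h.
  rewrite ok_all //=; lia.
have -> : (l == x) = false by apply/eqP => e; apply: hne.
rewrite orbF andbF; apply/esym/negbTE; lia.
Qed.

Lemma Cc_good N m : forall s, good s -> 0 < size s -> size s + m <= N -> Cc N m s = Fst m s.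
Proof.
elim: m => [|m IH] s hg hs hN.
  by rewrite /Cc /= cats0 hg /Fst /= muln0 addn0.
case/lastP: s hg hs hN => [//|t l] hg _ hN.
set s := rcons t l.
have Es : s = rcons t l by [].
clearbody s; rewrite -Es in hg hN.
have hM := good_mx hg.
have hk : size s + 1 <= N by lia.
rewrite Cc_S.
have e1 : \sum_(0 <= x < N) Cc N m (rcons s x) =
          \sum_(0 <= x < N) (if good (rcons s x) then Fst m (rcons s x) else 0).
  apply: eq_bigr => x _; case: ifP => h; last by rewrite Cc_bad ?h.
  by apply: IH => //; rewrite size_rcons //; lia.
rewrite e1 (big_cat_nat (n := mx s)) /=; [|lia|lia].
rewrite (big_cat_nat (n := (size s).+1) (p := N)) /=; [|lia|lia].
have p3 : \sum_((size s).+1 <= i < N) (if good (rcons s i) then Fst m (rcons s i) else 0) = 0.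
  rewrite big_nat_cond big1 // => i /andP [/andP [hi _] _].
  by rewrite good_rcons leqNgt hi /= andbF.
have p2 : \sum_(mx s <= i < (size s).+1) (if good (rcons s i) then Fst m (rcons s i) else 0)
          = Gs m (size s - mx s).
  rewrite big_nat_cond (eq_bigr (fun x => acnt m (size s - x) + (x - mx s) * ccnt m (size s - x).+1)); last first.
    move=> i /andP [/andP [h1 h2] _].
    have hgi : good (rcons s i) by rewrite good_rcons hg ok_all // andbT -ltnS.
    rewrite hgi /Fst size_rcons mx_rcons gp_rcons h1.
    have -> : maxn (mx s) i.+1 = i.+1 by lia.
    by rewrite subSS; congr (_ + _ * _); lia.
  rewrite -big_nat_cond.
  rewrite -{1}(add0n (mx s)) big_addn big_nat_rev /= /Gs sumnE big_map /index_iota !subn0.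
  have -> : (size s).+1 - mx s = (size s - mx s).+1 by lia.
  apply: eq_big_seq => j; rewrite mem_iota => /andP [_ hj].
  congr (acnt m _ + _ * ccnt m _.+1); lia.
have p1 : \sum_(0 <= i < mx s) (if good (rcons s i) then Fst m (rcons s i) else 0)
          = gp s * acnt m (size s - mx s).+1.
  rewrite big_nat_cond (eq_bigr (fun x => ((minn (mx t) l <= x) && (x < l.+1) : nat) * acnt m (size s - mx s).+1)); last first.
    move=> i /andP [/andP [_ h2] _].
    rewrite Es ind_lt -?Es //; case: ifP => //= _.
    rewrite /Fst size_rcons mx_rcons gp_rcons leqNgt h2 /= mul0n addn0 mul1n.
    by congr (acnt m _); lia.
  rewrite -big_nat_cond -big_distrl /= cnt_int.
  have hms : mx s = maxn (mx t) l.+1 by rewrite Es mx_rcons.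
  have hsz : size s = (size t).+1 by rewrite Es size_rcons.
  rewrite Es gp_rcons -Es hms; congr (_ * _); case: ifP; lia.
rewrite p1 p2 p3 addn0 /Fst acntS /=.
have := gp_pos s; case: (gp s) => [//|g] _ /=.
rewrite mulSn; lia.
Qed.

Lemma Cc_nil N m : m < N -> Cc N m.+1 [::] = acnt m 0.
Proof.
move=> hm; rewrite Cc_S big_ltn; last by lia.
have g0 : good (rcons [::] 0) by rewrite (good_rcons [::]) good_nil.
rewrite (@Cc_good N m (rcons [::] 0) g0 isT); last by rewrite size_rcons /=; lia.
rewrite big_nat_cond big1 ?addn0; last first.
  move=> i /andP [/andP [hi _] _]; rewrite Cc_bad //.
  by rewrite (good_rcons [::]) good_nil /=; case: i hi.
by rewrite /Fst /= addn0.
Qed.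

Lemma card_count (T : finType) (P : pred T) : #|[pred a | P a]| = count P (enum T).
Proof. by rewrite cardE /enum_mem size_filter count_filter; apply: eq_count => y; rewrite !inE andbT. Qed.

Lemma L_uniq N n : uniq (L N n).
Proof.
elim: n => [|n IH] //=; apply: allpairs_uniq => //; first exact: iota_uniq.
by move=> [x u] [y v] _ _ /= [-> ->].
Qed.

Lemma mem_L N n u : (u \in L N n) = (size u == n) && all (fun x => x < N) u.
Proof.
elim: n u => [|n IH] [|x u] //=.
  by apply/allpairsP => [[[y v] [_ _]]].
apply/allpairsP/idP => [[[y v] [/= hy hv [-> ->]]]|].
  move: hy hv; rewrite mem_iota IH add0n => /andP [_ hy] /andP [hs ha] /=.
  by rewrite eqSS hs ha hy.
rewrite eqSS => /and3P [hs hx ha]; exists (x, u); split => //=.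
  by rewrite mem_iota.
by rewrite IH hs ha.
Qed.

Lemma card_L N n (Q : pred (seq nat)) :
  #|[pred a : n.-tuple 'I_N | Q (map val a)]| = count Q (L N n).
Proof.
rewrite card_count; set e := enum _.
have -> : count (fun a : n.-tuple 'I_N => Q (map val a)) e =
          count Q (map (fun a : n.-tuple 'I_N => map val a) e).
  by rewrite count_map.
apply/permP; apply: uniq_perm.
- rewrite map_inj_uniq ?enum_uniq // => a b /= ee.
  by apply: val_inj; apply: (inj_map val_inj) ee.
- exact: L_uniq.
move=> u; rewrite mem_L; apply/mapP/idP => [[a _ ->]|/andP [hs ha]].
  rewrite size_map size_tuple eqxx /=; apply/allP => x /mapP [i _ ->]; exact: ltn_ord.
have hv : map val (pmap insub u : seq 'I_N) = u.
  by rewrite (pmap_filter (@insubK _ _ _)); apply/all_filterP; rewrite (eq_all (@isSome_insub _ _ _)).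
have hsz : size (pmap insub u : seq 'I_N) == n by rewrite -(size_map val) hv.
by exists (Tuple hsz); rewrite ?mem_enum //= hv.
Qed.

Lemma I_count_L n : I_count n = count good (L n n).
Proof. exact: (card_L n n good). Qed.

Lemma I_count0 : I_count 0 = 1.
Proof. by rewrite I_count_L /= good_nil. Qed.

Lemma I_countS n : I_count n.+1 = acnt n 0.
Proof. by rewrite I_count_L -(@Cc_nil n.+1 n). Qed.

Local Open Scope ring_scope.

Definition tr (n : nat) (f : fps) : {poly rat} := \poly_(i < n.+1) f i.

Lemma fps_mul_tr n m f g : (m <= n)%N -> fps_mul f g m = (tr n f * tr n g)`_m.
Proof.
move=> hm; rewrite coefM /fps_mul; apply: eq_bigr => i _.
rewrite !coef_poly; have hi : (i < n.+1)%N by apply: leq_trans (ltn_ord i) _; rewrite ltnS.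
rewrite hi; have -> : (m - i < n.+1)%N by rewrite ltnS (leq_trans (leq_subr _ _) hm).
by [].
Qed.

Lemma fps_mulC f g : fps_mul f g = fps_mul g f.
Proof. by apply: functional_extensionality => n; rewrite !(@fps_mul_tr n n _ _ (leqnn n)) mulrC. Qed.

Lemma fps_mulE f g n : fps_mul f g n = \sum_(i < n.+1) f i * g (n - i)%N.
Proof. by []. Qed.

Lemma fps_mulA f g h : fps_mul f (fps_mul g h) = fps_mul (fps_mul f g) h.
Proof.
apply: functional_extensionality => n.
have e1 : fps_mul f (fps_mul g h) n = (tr n f * (tr n g * tr n h))`_n.
  rewrite coefM fps_mulE; apply: eq_bigr => i _.
  rewrite coef_poly (leq_trans (ltn_ord i)) //.
  by rewrite (@fps_mul_tr n (n - i)) ?leq_subr.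
have e2 : fps_mul (fps_mul f g) h n = ((tr n f * tr n g) * tr n h)`_n.
  rewrite coefM fps_mulE; apply: eq_bigr => i _.
  rewrite (@fps_mul_tr n i) ?coef_poly; last by rewrite -ltnS.
  by rewrite ltnS leq_subr.
by rewrite e1 e2 mulrA.
Qed.

Lemma fps_const0 n : fps_const 0 n = 0.
Proof. by rewrite /fps_const; case: (n == 0%N). Qed.

Lemma fps_mul1 f : fps_mul (fps_const 1) f = f.
Proof.
apply: functional_extensionality => n; rewrite fps_mulE big_ord_recl /= subn0 mul1r.
by rewrite big1 ?addr0 // => i _; rewrite /fps_const /= mul0r.
Qed.

Lemma fps_ring : ring_theory (fps_const 0) (fps_const 1) fps_add fps_mul fps_sub fps_opp (@eq fps).
Proof.
constructor.
- by move=> f; apply: functional_extensionality => n; rewrite /fps_add fps_const0 add0r.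
- by move=> f g; apply: functional_extensionality => n; rewrite /fps_add addrC.
- by move=> f g h; apply: functional_extensionality => n; rewrite /fps_add addrA.
- exact: fps_mul1.
- exact: fps_mulC.
- exact: fps_mulA.
- move=> f g h; apply: functional_extensionality => n.
  by rewrite /fps_add !fps_mulE -big_split /=; apply: eq_bigr => i _; rewrite mulrDl.
- by [].
- by move=> f; apply: functional_extensionality => n; rewrite /fps_add /fps_opp fps_const0 subrr.
Qed.

Add Ring fpsRing : fps_ring.

From mathcomp Require Import lra.
Goal forall f g : fps, fps_mul (fps_add f g) (fps_add f g) = fps_add (fps_mul f f) (fps_add (fps_mul (fps_add (fps_const 1) (fps_const 1)) (fps_mul f g)) (fps_mul g g)).
Proof. intros; ring. Qed.



Lemma sumn_map_add (T : Type) (f g : T -> nat) s :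
  sumn [seq (f x + g x)%N | x <- s] = (sumn (map f s) + sumn (map g s))%N.
Proof. by elim: s => //= x s ->; lia. Qed.


Lemma sumn1 x : sumn [:: x] = x.
Proof. by rewrite /= addn0. Qed.

Lemma Gs_succ m h : Gs m h.+1 = (Gs m h + acnt m h.+1 + Hs m h)%N.
Proof.
rewrite /Gs /Hs iotaS0 map_rcons -cats1 sumn_cat sumn1 subnn mul0n !addn0.
have -> : [seq (acnt m h' + (h.+1 - h') * ccnt m h'.+1)%N | h' <- iota 0 h.+1] =
          [seq ((acnt m h' + (h - h') * ccnt m h'.+1) + ccnt m h'.+1)%N | h' <- iota 0 h.+1].
  apply/eq_in_map => x; rewrite mem_iota add0n ltnS => hx.
  by rewrite subSn // mulSn; lia.
by rewrite sumn_map_add; lia.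
Qed.

Lemma Hs_succ m h : Hs m h.+1 = (Hs m h + ccnt m h.+2)%N.
Proof. by rewrite /Hs iotaS0 map_rcons -cats1 sumn_cat sumn1. Qed.

Lemma acnt_diff2 m h :
  (acnt m.+1 h.+2 + acnt m.+1 h + acnt m h.+2 =
   2 * acnt m.+1 h.+1 + acnt m h.+3 + ccnt m h.+2)%N.
Proof. rewrite !acntS !Gs_succ Hs_succ; lia. Qed.

Lemma acnt_0 m : acnt m.+1 0 = (acnt m 0 + acnt m 1)%N.
Proof. by rewrite acntS /Gs /= subnn mul0n !addn0. Qed.

Lemma acnt_1 m : acnt m.+1 1 = (acnt m 0 + ccnt m 1 + acnt m 1 + acnt m 2)%N.
Proof. by rewrite acntS /Gs /= subnn subn0 mul0n mul1n !addn0; lia. Qed.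

Local Notation "f +' g" := (fps_add f g) (at level 50, left associativity).
Local Notation "f *' g" := (fps_mul f g) (at level 40, left associativity).
Local Notation "f -' g" := (fps_sub f g) (at level 50, left associativity).
Local Notation c1 := (fps_const 1).
Local Notation c0 := (fps_const 0).
Local Notation z := fps_z.

Lemma zmul0 f : (z *' f) 0%N = 0.
Proof. by rewrite fps_mulE big_ord1 /fps_z /= mul0r. Qed.

Lemma zmulS f n : (z *' f) n.+1 = f n.
Proof.
rewrite fps_mulE big_ord_recl /fps_z /= mul0r add0r big_ord_recl /= mul1r subSS subn0.
by rewrite big1 ?addr0 // => i _; rewrite mul0r.
Qed.

Lemma mul0E f g : (f *' g) 0%N = f 0%N * g 0%N.
Proof. by rewrite fps_mulE big_ord1. Qed.

Lemma fps_const2 : fps_const 2 = c1 +' c1.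
Proof. by apply: functional_extensionality => n; rewrite /fps_add /fps_const; case: (n == 0%N). Qed.

Lemma constS c n : fps_const c n.+1 = 0.
Proof. by []. Qed.
Lemma const0 c : fps_const c 0 = c.
Proof. by []. Qed.
Lemma acnt0 h : acnt 0 h = 1%N.
Proof. by []. Qed.

Definition A (h : nat) : fps := fun m => (acnt m h)%:R.

Lemma zzA k m : (z *' (z *' A k)) m.+1 = (ccnt m k)%:R.
Proof. by rewrite zmulS; case: m => [|m]; rewrite ?zmul0 ?zmulS. Qed.

Lemma R0 : A 0 = c1 +' z *' A 0 +' z *' A 1.
Proof.
apply: functional_extensionality => [[|n]]; rewrite /fps_add ?zmul0 ?zmulS /A ?constS ?const0.
  by rewrite acnt0 !addr0.
by rewrite acnt_0 natrD add0r.
Qed.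

Lemma R1 : A 1 = c1 +' z *' (A 0 +' A 1) +' z *' (z *' A 1) +' z *' A 2.
Proof.
apply: functional_extensionality => [[|n]]; rewrite /fps_add ?zmul0 ?zzA ?zmulS /A ?constS ?const0.
  by rewrite acnt0 !addr0.
rewrite acnt_1 !natrD add0r; lra.
Qed.

Lemma FT h : z *' A h.+3 +' z *' (z *' A h.+2) +' A h.+1 +' A h.+1 =
             z *' A h.+2 +' A h.+2 +' A h.
Proof.
apply: functional_extensionality => [[|n]]; rewrite /fps_add ?zmul0 ?zzA ?zmulS /A.
  by rewrite !acnt0 !add0r.
have := acnt_diff2 n h; move/(congr1 (fun k => k%:R : rat)); rewrite !natrD !natrM => e.
lra.
Qed.

Lemma fps_ext (f g : fps) : (forall n, f n = g n) -> f = g.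
Proof. exact: functional_extensionality. Qed.

Definition gX (X f : fps) : fps := z *' (X *' f).

Lemma low_gX X f k : (forall i, (i < k)%N -> f i = 0) ->
  forall i, (i < k.+1)%N -> gX X f i = 0.
Proof.
move=> hf [|i] hi; rewrite /gX ?zmul0 ?zmulS //.
rewrite fps_mulE big1 // => j _; rewrite hf ?mulr0 //.
by apply: leq_ltn_trans (leq_subr _ _) _.
Qed.

Lemma low_iter X f k : forall i, (i < k)%N -> iter k (gX X) f i = 0.
Proof.
elim: k => [|k IH] i hi //; rewrite iterS; exact: low_gX IH i hi.
Qed.

Lemma cancel_unit (K f : fps) : K 0%N = 1 -> K *' f = c0 -> forall n, f n = 0.
Proof.
move=> hK hKf n; elim: n {-2}n (leqnn n) => [|n IH] m hm.
  move: hm; rewrite leqn0 => /eqP ->.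
  by have := congr1 (fun g => g 0%N) hKf; rewrite mul0E hK mul1r.
case: (ltngtP m n.+1) hm => // [hm _|-> _]; first by apply: IH; rewrite -ltnS.
have := congr1 (fun g => g n.+1) hKf; rewrite fps_mulE big_ord_recl hK mul1r subn0 /=.
rewrite big1 ?addr0 ?const0 //= => i _; rewrite IH ?mulr0 //.
by rewrite subSS leq_subr.
Qed.

Lemma addE f g n : (f +' g) n = f n + g n. Proof. by []. Qed.
Lemma subE f g n : (f -' g) n = f n - g n. Proof. by []. Qed.
Lemma z0 : z 0%N = 0. Proof. by []. Qed.

Section WithX.
Variable X : fps.
Hypothesis hX : solves_X_eqn X.

Let Cx := X_eqn_lhs X.
Lemma hC : Cx = c0.
Proof. by apply: fps_ext => n; rewrite /Cx hX; case: n. Qed.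

Let P := (c1 +' z -' z *' z) *' X -' c1.
Let cp h := z *' X *' A h.+2 -' P *' A h.+1 +' z *' X *' X *' A h.

Lemma cp_step h : gX X (cp h.+1) = cp h.
Proof.
have e : gX X (cp h.+1) = cp h +' z *' X *' X *' ((z *' A h.+3 +' z *' (z *' A h.+2) +' A h.+1 +' A h.+1) -'
             (z *' A h.+2 +' A h.+2 +' A h)) -' Cx *' A h.+1.
  rewrite /gX /cp /P /Cx /X_eqn_lhs; cbv zeta; rewrite fps_const2; ring.
rewrite e FT hC; ring.
Qed.

Lemma cp0_iter k : cp 0 = iter k (gX X) (cp k).
Proof.
elim: k => [|k IH] //; by rewrite IH -cp_step iterSr.
Qed.

Lemma cp0 : cp 0 = c0.
Proof.
apply: fps_ext => n; rewrite (cp0_iter n.+1) low_iter // ?const0; by case: n.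
Qed.

Lemma X0 : X 0%N = 1.
Proof.
have := hX 0; rewrite /X_eqn_lhs /fps_add /fps_sub /fps_add /fps_opp !mul0E !const0 /fps_z /=.
lra.
Qed.

Let K := (c1 -' (c1 +' c1) *' z *' X) *' (c1 -' z) -' z *' z *' X +' z *' z *' X *' X.
Let RHS0 := c1 +' z *' A 0 +' z *' A 1.
Let RHS1 := c1 +' z *' (A 0 +' A 1) +' z *' (z *' A 1) +' z *' A 2.

Lemma KA0 : K *' A 0 = c1 -' z *' X.
Proof.
have r0 : A 0 -' RHS0 = c0 by rewrite /RHS0 {1}R0; ring.
have r1 : A 1 -' RHS1 = c0 by rewrite /RHS1 {1}R1; ring.
have e : K *' A 0 = (c1 -' z *' X) +' z *' cp 0 +' (c1 -' (c1 +' c1) *' z *' X) *' (A 0 -' RHS0)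
                   +' z *' X *' (A 1 -' RHS1).
  rewrite /K /cp /P /RHS0 /RHS1; ring.
rewrite e cp0 r0 r1; ring.
Qed.

Let W := (X -' c1) *' (c1 -' z *' X +' z *' z *' X) -' z *' X.

Lemma K0 : K 0%N = 1.
Proof.
rewrite /K; rewrite !(mul0E, addE, subE, const0) z0 X0; lra.
Qed.

Lemma main_alg : z *' z *' X *' A 0 = W.
Proof.
have e : K *' (z *' z *' X *' A 0 -' W) = z *' z *' X *' (K *' A 0) -' K *' W by ring.
have e2 : K *' W = z *' z *' X *' (c1 -' z *' X) +' (z -' c1) *' (c1 -' z *' X) *' Cx.
  rewrite /K /W /Cx /X_eqn_lhs; cbv zeta; rewrite fps_const2; ring.
rewrite KA0 e2 hC in e.
have : K *' (z *' z *' X *' A 0 -' W) = c0 by rewrite e; ring.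
move/(cancel_unit K0) => h.
have h2 : z *' z *' X *' A 0 -' W = c0 by apply: fps_ext => n; case: n => [|n]; rewrite h ?const0 ?constS.
by transitivity (z *' z *' X *' A 0 -' W +' W); [ring | rewrite h2; ring].
Qed.

Lemma main_gf (I : fps) : I = c1 +' z *' A 0 ->
  z *' X *' I = (X -' c1) *' (c1 -' z *' X +' z *' z *' X).
Proof.
move=> ->.
transitivity (z *' X +' z *' z *' X *' A 0); first ring.
rewrite main_alg /W; ring.
Qed.
End WithX.

Definition agree k (f g : fps) := forall i, (i < k)%N -> f i = g i.

Lemma agree_add k f g f' g' : agree k f g -> agree k f' g' -> agree k (f +' f') (g +' g').
Proof. by move=> h h' i hi; rewrite !addE h ?h'. Qed.
Lemma agree_sub k f g f' g' : agree k f g -> agree k f' g' -> agree k (f -' g') (g -' f').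
Abort.
Lemma agree_sub k f g f' g' : agree k f g -> agree k f' g' -> agree k (f -' f') (g -' g').
Proof. by move=> h h' i hi; rewrite !subE h ?h'. Qed.
Lemma agree_opp k f g : agree k f g -> agree k (fps_opp f) (fps_opp g).
Proof. by move=> h i hi; rewrite /fps_opp h. Qed.
Lemma agree_refl k f : agree k f f. Proof. by []. Qed.
Lemma agree_mul k f g f' g' : agree k f g -> agree k f' g' -> agree k (f *' f') (g *' g').
Proof.
move=> h h' i hi; rewrite !fps_mulE; apply: eq_bigr => j _.
rewrite h ?h' //; first by apply: leq_ltn_trans (leq_subr _ _) hi.
exact: leq_trans (ltn_ord j) hi.
Qed.
Lemma agree_z k f g : agree k f g -> agree k.+1 (z *' f) (z *' g).
Proof. by move=> h [|i] hi; rewrite ?zmul0 ?zmulS // h. Qed.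
Lemma agree_le j k f g : (j <= k)%N -> agree k f g -> agree j f g.
Proof. by move=> hjk h i hi; apply: h; apply: leq_trans hi hjk. Qed.

Definition Psi (f : fps) := (c0 -' f) +' (c1 +' c1) *' f *' f +' z *' f -' z *' f *' f *' f.
Definition Tm (f : fps) := c1 +' z *' Psi f.

Lemma agree_Tm k f g : agree k f g -> agree k.+1 (Tm f) (Tm g).
Proof.
move=> h; apply: agree_add => //; apply: agree_z; rewrite /Psi.
repeat (apply: agree_add || apply: agree_sub || apply: agree_opp || apply: agree_mul || exact: agree_refl || exact: h).
Qed.

Lemma lhs_Tm f : X_eqn_lhs f = Tm f -' f.
Proof. rewrite /X_eqn_lhs /Tm /Psi; cbv zeta; rewrite fps_const2; ring. Qed.

Lemma solves_fix f : solves_X_eqn f -> Tm f = f.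
Proof.
move=> h; have e : X_eqn_lhs f = c0 by apply: fps_ext => n; rewrite h; case: n.
rewrite lhs_Tm in e.
by transitivity (Tm f -' f +' f); [ring | rewrite e; ring].
Qed.

Lemma X_unique X Y : solves_X_eqn X -> solves_X_eqn Y -> forall n, X n = Y n.
Proof.
move=> /solves_fix hx /solves_fix hy.
suff H : forall k, agree k X Y by move=> n; apply: (H n.+1).
elim=> [|k IH]; first by [].
by rewrite -hx -hy; apply: agree_Tm.
Qed.

Definition Xk k := iter k Tm c0.
Definition Xs : fps := fun n => Xk n.+1 n.

Lemma Xk_agree k : agree k (Xk k) (Xk k.+1).
Proof. elim: k => [|k IH] //; exact: agree_Tm. Qed.

Lemma Xk_agree2 j k : (j <= k)%N -> agree j (Xk j) (Xk k).
Proof.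
move=> hjk; rewrite -(subnKC hjk); elim: (k - j)%N => [|d IH]; first by rewrite addn0.
move=> i hi; rewrite IH // addnS; apply: Xk_agree.
exact: leq_trans hi (leq_addr _ _).
Qed.

Lemma Xs_solves : solves_X_eqn Xs.
Proof.
have ag : forall n, agree n.+1 Xs (Xk n.+1).
  move=> n i hi; rewrite /Xs; apply: (Xk_agree2 hi); exact: ltnSn.
have fix1 : Tm Xs = Xs.
  apply: fps_ext => n.
  have := agree_Tm (ag n) (leqW (ltnSn n)) => ->.
  have -> : Tm (Xk n.+1) = Xk n.+2 by [].
  by rewrite -(Xk_agree (ltnSn n)).
move=> n; rewrite lhs_Tm fix1 subE subrr; by [].
Qed.

Lemma I_gf_A : I_gf = c1 +' z *' A 0.
Proof.
apply: fps_ext => [[|n]]; rewrite /I_gf addE ?zmul0 ?zmulS ?const0 ?constS.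
  by rewrite I_count0 addr0.
by rewrite I_countS add0r.
Qed.

Theorem mainTheorem6 :
  (exists X : fps, solves_X_eqn X) /\
  (forall X Y : fps, solves_X_eqn X -> solves_X_eqn Y -> forall n, X n = Y n) /\
  (forall X : fps, solves_X_eqn X ->
     forall n,
       fps_mul (fps_mul fps_z X) I_gf n =
       fps_mul (fps_sub X (fps_const 1))
               (fps_add (fps_sub (fps_const 1) (fps_mul fps_z X))
                        (fps_mul (fps_mul fps_z fps_z) X)) n) /\
  [:: I_count 0; I_count 1; I_count 2; I_count 3; I_count 4; I_count 5;
      I_count 6; I_count 7] = [:: 1; 1; 2; 5; 15; 50; 178; 663]%N.
Proof.
split; first by exists Xs; exact: Xs_solves.
split; first exact: X_unique.
split; first by move=> X hX n; rewrite (main_gf hX I_gf_A).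
by rewrite I_count0 !I_countS; vm_compute.
Qed.
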